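(* Let $G$ be a directed graph on vertex set $V$ with $|V|=n$, and let $\pi:V\to[1,n]$ be such that (a) if $x,y$ lie in distinct strongly connected components of $G$ and there is an $x\to y$ path in $G$, then $\pi(x)<\pi(y)$, and (b) if $x,y$ are strongly connected then $\pi(x)=\pi(y)$. Let $s\in V$, let $V_s$ be the set of vertices reachable from $s$ in $G$, let $\mathcal{S}_s$ be the set of strongly connected components of $G$ reachable from $s$, and let $\mathcal{S}_s'\subseteq\mathcal{S}_s$ be arbitrary. Suppose $H\subseteq G[V_s]$ with $V(H)=V_s$ satisfies: (1) for each $t\in V_s\setminus\{s\}$ for which some edge $vt\in E(G)$ with $v\in\bigcup\mathcal{S}_s'$ exists, $H$ contains such an edge $vt$ with $\pi(v)$ minimal among all $v\in\bigcup\mathcal{S}_s'$ with $vt\in E(G)$; (2) for all $(X,Y)\in(\mathcal{S}_s\setminus\mathcal{S}_s')\times\mathcal{S}_s$, $H$ contains an edge $xy\in E(G)\cap(X\times Y)$ if such an edge exists; (3) for each $S\in\mathcal{S}_s$, $H[S]$ is strongly connected. Then all vertices of $V_s$ are reachable from $s$ in $H$.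
   Context: Strongly connected components are the equivalence classes of mutual reachability; $G[U]$ denotes the subgraph induced by $U$. *)

(* Defs.v *)
From mathcomp Require Import all_boot.
Set Implicit Arguments. Unset Strict Implicit. Unset Printing Implicit Defensive.

(* A directed graph on a finite vertex type V is an edge relation e : rel V.
   Reachability (paths, including the trivial one) is [connect e]. *)

Definition strongly_connected (V : finType) (e : rel V) (x y : V) : bool :=
  connect e x y && connect e y x.

Definition scc (V : finType) (e : rel V) (x : V) : {set V} :=
  [set y | strongly_connected e x y].

Definition reach_set (V : finType) (e : rel V) (s : V) : {set V} :=
  [set v | connect e s v].

Definition reach_sccs (V : finType) (e : rel V) (s : V) : {set {set V}} :=
  [set scc e x | x in reach_set e s].

Definition induced (V : finType) (e : rel V) (U : {set V}) : rel V :=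
  [rel a b | [&& e a b, a \in U & b \in U]].

(* Main.v *)
Require Import Defs.
From mathcomp Require Import all_boot.

Lemma exit_edge (V : finType) (e : rel V) (A : {set V}) a b :
  connect e a b -> a \notin A -> b \in A ->
  exists x t, [/\ x \notin A, t \in A, e x t & connect e a x].
Proof.
move/connectP=> [p]; elim: p a => [|c p IH] a /=.
  by move=> _ -> /negP.
move=> /andP[eac pth] lst aA bA.
case: (boolP (c \in A)) => cA.
  by exists a, c; split.
have [x [t [xA tA ext cx]]] := IH c pth lst cA bA.
exists x, t; split=> //; exact: connect_trans (connect1 eac) cx.
Qed.

Lemma sc_sym (V : finType) (e : rel V) x y :
  strongly_connected e x y = strongly_connected e y x.
Proof. by rewrite /strongly_connected andbC. Qed.

Lemma sc_trans (V : finType) (e : rel V) x y z :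
  strongly_connected e x y -> strongly_connected e y z -> strongly_connected e x z.
Proof.
move=> /andP[a b] /andP[c d]; apply/andP; split; [exact: connect_trans a c|exact: connect_trans d b].
Qed.

Theorem lemma14 (V : finType) (e : rel V) (pi : V -> nat)
  (pi_range : forall x, 1 <= pi x <= #|V|)
  (pi_a : forall x y, ~~ strongly_connected e x y -> connect e x y -> pi x < pi y)
  (pi_b : forall x y, strongly_connected e x y -> pi x = pi y)
  (s : V) (S' : {set {set V}}) (HS' : S' \subset reach_sccs e s)
  (h : rel V)
  (h_sub : forall x y, h x y -> induced e (reach_set e s) x y)
  (H1 : forall t, t \in reach_set e s -> t != s ->
          (exists2 v, v \in cover S' & e v t) ->
          exists2 v, v \in cover S' &
            h v t /\ (forall u, u \in cover S' -> e u t -> pi v <= pi u))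
  (H2 : forall X Y, X \in reach_sccs e s :\: S' -> Y \in reach_sccs e s ->
          (exists x y, [/\ x \in X, y \in Y & e x y]) ->
          exists x y, [/\ x \in X, y \in Y & h x y])
  (H3 : forall S, S \in reach_sccs e s ->
          forall x y, x \in S -> y \in S -> connect (induced h S) x y) :
  forall v, v \in reach_set e s -> connect h s v.
Proof.
have scc_refl : forall x, x \in scc e x.
  by move=> x; rewrite inE /strongly_connected connect0.
have hsrc : forall x y, h x y -> x \in reach_set e s.
  by move=> x y /h_sub /and3P[].
have sccR : forall x, x \in reach_set e s -> scc e x \in reach_sccs e s.
  by move=> x xR; apply/imsetP; exists x.
suff: forall k y, pi y < k -> y \in reach_set e s -> connect h s y.
  by move=> K v vR; apply: (K (pi v).+1).
elim=> // k IH y yk yR.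
suff [w wY sw] : exists2 w, w \in scc e y & connect h s w.
  apply: connect_trans sw _.
  have := H3 _ (sccR y yR) w y wY (scc_refl y).
  apply: connect_sub => a b /andP[hab _]; exact: connect1.
case: (boolP (s \in scc e y)) => sY; first by exists s.
have syR : connect e s y by move: yR; rewrite inE.
have [x [t [xY tY ext sx]]] := @exit_edge _ e _ s y syR sY (scc_refl y).
have xR : x \in reach_set e s by rewrite inE.
have sct : strongly_connected e y t by move: tY; rewrite inE.
have pity : pi t = pi y by rewrite (pi_b _ _ sct).
have pixt : pi x < pi t.
  apply: pi_a; last exact: connect1.
  apply/negP=> sxt; move/negP: xY; apply; rewrite inE.
  by apply: sc_trans sct _; rewrite sc_sym.
have sxh : connect h s x by apply: IH => //; rewrite -ltnS; apply: leq_trans yk; rewrite -pity.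
case: (boolP (scc e x \in S')) => xS.
  have xc : x \in cover S' by apply/bigcupP; exists (scc e x).
  have tR : t \in reach_set e s.
    by rewrite inE; apply: connect_trans sx (connect1 ext).
  have tns : t != s.
    apply/eqP=> ts; move: sY; rewrite -ts tY //.
  have [v vc [hvt vmin]] := H1 t tR tns (ex_intro2 _ _ x xc ext).
  exists t => //.
  apply: connect_trans (connect1 hvt).
  apply: IH; last exact: hsrc hvt.
  have := vmin x xc ext; rewrite -ltnS => H; apply: leq_trans H _.
  by rewrite -ltnS; apply: leq_trans yk; rewrite ltnS -pity.
have [x' [y' [x'X y'Y hxy]]] : exists x' y', [/\ x' \in scc e x, y' \in scc e y & h x' y'].
  apply: H2; first by rewrite inE xS sccR.
    exact: sccR.
  by exists x, t; split.
exists y' => //.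
apply: connect_trans (connect1 hxy).
apply: IH; last exact: hsrc hxy.
have scx : strongly_connected e x x' by move: x'X; rewrite inE.
rewrite -(pi_b _ _ scx) -ltnS; apply: leq_trans yk; rewrite ltnS -pity //.
Qed.
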